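(* Let $M\ge 1$ be an integer, let $U=\{0,1,\ldots,M-1\}$, and let $\phi:\binom{U}{2}\to\{\text{red},\text{blue}\}$ be an arbitrary $2$-coloring of the pairs of $U$. Let $H=H_\phi$ be the $4$-uniform hypergraph on $V=\{0,1,\ldots,2^M-1\}$ defined below. Then $H$ contains no copy of $K_5^{(4)}$, i.e., there is no $5$-element set $P\subseteq V$ all of whose $4$-element subsets are edges of $H$.
   Context: Every $a\in V=\{0,\ldots,2^M-1\}$ is written in binary as $a=\sum_{i=0}^{M-1}a(i)2^i$ with $a(i)\in\{0,1\}$. For $a\ne b$ in $V$, $\delta(a,b)$ denotes the largest index $i$ with $a(i)\ne b(i)$; thus $\delta(a,b)\in U$. For a pair $\{x,y\}$ of distinct elements of $U$ we write $\phi(x,y)=\phi(y,x)$ for its color. For a $4$-tuple $v_1<v_2<v_3<v_4$ of $V$, set $\delta_i=\delta(v_i,v_{i+1})$ for $i=1,2,3$. The $4$-tuple $\{v_1,v_2,v_3,v_4\}$ is an edge of $H$ if and only if one of the following holds: (i) $\delta_1<\delta_2<\delta_3$ or $\delta_1>\delta_2>\delta_3$, and $\phi(\delta_1,\delta_2)=\phi(\delta_2,\delta_3)\ne\phi(\delta_1,\delta_3)$; (ii) $\delta_1>\delta_2<\delta_3$, $\delta_1>\delta_3$, and $\phi(\delta_1,\delta_2)\ne\phi(\delta_2,\delta_3)$; (iii) $\delta_1>\delta_2<\delta_3$, $\delta_1<\delta_3$, and $\phi(\delta_1,\delta_2)=\phi(\delta_1,\delta_3)=\phi(\delta_2,\delta_3)$.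 (Consecutive values $\delta_i,\delta_{i+1}$ are always distinct, and in cases (ii),(iii) $\delta_1\neq\delta_3$ is required, so all colors above are of pairs of distinct elements.) *)

(* Defs.v *)
From mathcomp Require Import all_boot.
Unset Printing Implicit Defensive.

Definition bit (a i : nat) : bool := odd (a %/ 2 ^ i).

Definition delta (M a b : nat) : nat := \max_(i < M | bit a i != bit b i) i.

(* Edge condition for v1 < v2 < v3 < v4, colouring phi on pairs of U
   (colours encoded as bool). *)
Definition edge_cond (M : nat) (phi : nat -> nat -> bool) (v1 v2 v3 v4 : nat) : bool :=
  let d1 := delta M v1 v2 in
  let d2 := delta M v2 v3 in
  let d3 := delta M v3 v4 in
  [|| [&& ((d1 < d2 < d3) || (d3 < d2 < d1)),
          phi d1 d2 == phi d2 d3 & phi d1 d2 != phi d1 d3],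
      [&& d2 < d1, d2 < d3, d3 < d1 & phi d1 d2 != phi d2 d3]
    | [&& d2 < d1, d2 < d3, d1 < d3, phi d1 d2 == phi d1 d3 & phi d1 d3 == phi d2 d3]].

Definition hedge (M : nat) (phi : nat -> nat -> bool) (S : {set 'I_(2 ^ M)}) : Prop :=
  exists v1 v2 v3 v4 : 'I_(2 ^ M),
    [/\ v1 < v2, v2 < v3, v3 < v4, S = [set v1; v2; v3; v4]
      & edge_cond M phi v1 v2 v3 v4].

(* Main.v *)
Require Import Defs.
From mathcomp Require Import all_boot zify.
Set Warnings "-notation-overridden".

Lemma bit_big M x j : x < 2 ^ M -> M <= j -> bit x j = false.
Proof.
move=> hx hj; rewrite /bit divn_small //.
apply: leq_trans hx _; exact: leq_pexp2l.
Qed.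

Lemma bit_div x a j : bit (x %/ 2 ^ a) j = bit x (a + j).
Proof. by rewrite /bit -divnMA -expnD. Qed.

Lemma bit_inj n : forall x y, x < 2 ^ n -> y < 2 ^ n ->
  (forall j, bit x j = bit y j) -> x = y.
Proof.
elim: n => [|n IH] x y.
  by rewrite expn0 !ltnS !leqn0 => /eqP -> /eqP ->.
move=> hx hy hb.
have h0 : odd x = odd y by have := hb 0; rewrite /bit !expn0 !divn1.
have hh : x./2 = y./2.
  apply: IH.
  - rewrite -divn2; rewrite expnS in hx; lia.
  - rewrite -divn2; rewrite expnS in hy; lia.
  move=> j; have := hb j.+1.
  by rewrite -!divn2 -(addn1 j) addnC -!bit_div expn1.
by rewrite -(odd_double_half x) -(odd_double_half y) h0 hh.
Qed.

Lemma delta_ub M a b : 0 < M -> delta M a b < M.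
Proof.
move=> hM; have h : delta M a b <= M.-1.
  by apply/bigmax_leqP => i _; rewrite -ltnS prednK.
by apply: leq_ltn_trans h _; rewrite ltn_predL.
Qed.

Lemma delta_uniq M u w m : m < M -> bit u m != bit w m ->
  (forall j, m < j -> bit u j = bit w j) -> delta M u w = m.
Proof.
move=> hm hd ha; apply/eqP; rewrite eqn_leq; apply/andP; split.
  apply/bigmax_leqP => j hj; rewrite leqNgt; apply/negP => hlt.
  by move: hj; rewrite ha // eqxx.
exact: (leq_bigmax_cond (Ordinal hm) hd).
Qed.

Lemma delta_char M u v : u < 2 ^ M -> v < 2 ^ M -> u < v ->
  [/\ delta M u v < M, bit u (delta M u v) = false, bit v (delta M u v) = true
   & forall j, delta M u v < j -> bit u j = bit v j].
Proof.
move=> hu hv huv.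
have [i0 hi0] : exists i0 : 'I_M, bit u i0 != bit v i0.
  case: (boolP [exists i : 'I_M, bit u i != bit v i]) => [/existsP //|]; rewrite negb_exists => /forallP hall.
  have : u = v.
    apply: (@bit_inj M u v hu hv) => j.
    case: (ltnP j M) => hj; first by have := hall (Ordinal hj); rewrite negbK => /eqP.
    by rewrite (@bit_big _ _ _ hu hj) (@bit_big _ _ _ hv hj).
  by move=> e; rewrite e ltnn in huv.
have hA : forall j, delta M u v < j -> bit u j = bit v j.
  move=> j hj; case: (ltnP j M) => hjM; last by rewrite (@bit_big _ _ _ hu hjM) (@bit_big _ _ _ hv hjM).
  apply/eqP; apply/negP => /negP hne.
  have := @leq_bigmax_cond _ (fun i : 'I_M => bit u i != bit v i) (fun i => nat_of_ord i) (Ordinal hjM) hne; rewrite -/(delta M u v) /= => h.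
  by rewrite leqNgt hj in h.
have hd : bit u (delta M u v) != bit v (delta M u v).
  have e := @bigmax_eq_arg _ i0 (fun i : 'I_M => bit u i != bit v i) (fun i => nat_of_ord i) hi0.
  rewrite /delta e.
  by case: arg_maxnP.
have hq : u %/ 2 ^ (delta M u v).+1 = v %/ 2 ^ (delta M u v).+1.
  apply: (@bit_inj M).
  - apply: leq_ltn_trans hu; exact: leq_div.
  - apply: leq_ltn_trans hv; exact: leq_div.
  move=> j; rewrite !bit_div; apply: hA; lia.
have hle : u %/ 2 ^ delta M u v <= v %/ 2 ^ delta M u v by apply: leq_div2r; exact: ltnW.
have hdb : forall x, x %/ 2 ^ (delta M u v).+1 = (x %/ 2 ^ delta M u v)./2.
  by move=> x; rewrite -divn2 -divnMA expnS mulnC.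
rewrite hdb hdb in hq.
move: hd hle; rewrite /bit -(odd_double_half (u %/ 2 ^ delta M u v)) -(odd_double_half (v %/ 2 ^ delta M u v)) hq.
split => //.
- exact: delta_ub (leq_ltn_trans (leq0n _) (valP i0)).
- move: hd hle; case: (odd (u %/ _)); case: (odd (v %/ _)) => //=; lia.
- move: hd hle; case: (odd (u %/ _)); case: (odd (v %/ _)) => //=; lia.
Qed.

Lemma delta_triple M u v w : u < 2 ^ M -> v < 2 ^ M -> w < 2 ^ M -> u < v -> v < w ->
  delta M u v != delta M v w /\ delta M u w = maxn (delta M u v) (delta M v w).
Proof.
move=> hu hv hw huv hvw.
have [i1 a1 b1 c1] := delta_char M u v hu hv huv.
have [i2 a2 b2 c2] := delta_char M v w hv hw hvw.
have hne : delta M u v != delta M v w.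
  by apply/eqP => e; rewrite e a2 in b1.
split => //.
case: (ltngtP (delta M u v) (delta M v w)) => h; last by rewrite h eqxx in hne.
- apply: delta_uniq => //.
  + by rewrite c1 // a2 b2.
  + by move=> j hj; rewrite c1 ?c2 //; exact: ltn_trans hj.
- apply: delta_uniq => //.
  + by rewrite a1 -c2 // b1.
  + by move=> j hj; rewrite c1 ?c2 //; exact: ltn_trans hj.
Qed.

Definition E (phi : nat -> nat -> bool) d1 d2 d3 : bool :=
  [|| [&& ((d1 < d2 < d3) || (d3 < d2 < d1)),
          phi d1 d2 == phi d2 d3 & phi d1 d2 != phi d1 d3],
      [&& d2 < d1, d2 < d3, d3 < d1 & phi d1 d2 != phi d2 d3]
    | [&& d2 < d1, d2 < d3, d1 < d3, phi d1 d2 == phi d1 d3 & phi d1 d3 == phi d2 d3]].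

Definition F psi a b c d :=
  [&& E psi a b c, E psi b c d, E psi (maxn a b) c d, E psi a (maxn b c) d
    & E psi a b (maxn c d)].

Definition cons_ok a b c d : bool :=
  [&& a != b, a != maxn b c, a != maxn (maxn b c) d, maxn a b != c,
      maxn a b != maxn c d, maxn (maxn a b) c != d, b != c, b != maxn c d,
      maxn b c != d & c != d].

Definition pairs : seq (nat * nat) :=
  [:: (0,0);(0,1);(1,1);(0,2);(1,2);(2,2);(0,3);(1,3);(2,3);(3,3)].
Definition idx i j := i + (j * j.+1)./2.
Definition psiS (s : seq bool) i j := nth false s (idx (minn i j) (maxn i j)).

Fixpoint lists n : seq (seq bool) :=
  if n is n'.+1 then [seq b :: l | b <- [:: false; true], l <- lists n'] else [:: [::]].

Definition checker :=
  all (fun a => all (fun b => all (fun c => all (fun d =>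
    cons_ok a b c d ==> all (fun s => ~~ F (psiS s) a b c d) (lists 10))
   (iota 0 4)) (iota 0 4)) (iota 0 4)) (iota 0 4).

Lemma checker_ok : checker = true.
Proof. vm_compute. reflexivity. Qed.

Lemma mem_lists n s : size s = n -> s \in lists n.
Proof.
elim: n s => [|n IH] [|x s] //= [hs].
rewrite !mem_cat; case: x.
  by apply/orP; right; apply/orP; left; apply/mapP; exists s => //; exact: IH.
by apply/orP; left; apply/mapP; exists s => //; exact: IH.
Qed.

Lemma E_ext psi1 psi2 x y z : psi1 x y = psi2 x y -> psi1 y z = psi2 y z ->
  psi1 x z = psi2 x z -> E psi1 x y z = E psi2 x y z.
Proof. by move=> h1 h2 h3; rewrite /E h1 h2 h3. Qed.

Lemma F_ext psi1 psi2 a b c d : (forall x y, x < 4 -> y < 4 -> psi1 x y = psi2 x y) ->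
  a < 4 -> b < 4 -> c < 4 -> d < 4 -> F psi1 a b c d = F psi2 a b c d.
Proof.
move=> H ha hb hc hd.
have hab : maxn a b < 4 by rewrite gtn_max ha hb.
have hbc : maxn b c < 4 by rewrite gtn_max hc hb.
have hcd : maxn c d < 4 by rewrite gtn_max hc hd.
by rewrite /F !(@E_ext psi1 psi2) //; apply: H.
Qed.

Lemma finite_case psi a b c d : (forall i j, psi i j = psi j i) ->
  a < 4 -> b < 4 -> c < 4 -> d < 4 -> cons_ok a b c d -> ~~ F psi a b c d.
Proof.
move=> hsym ha hb hc hd hok.
pose s := [seq psi p.1 p.2 | p <- pairs].
have hs : forall x y, x < 4 -> y < 4 -> psi x y = psiS s x y.
  move=> x y; case: x => [|[|[|[|x]]]] //; case: y => [|[|[|[|y]]]] // _ _;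
    by rewrite /psiS /= ?hsym.
rewrite (@F_ext psi (psiS s) a b c d hs) //.
have := checker_ok; rewrite /checker.
move=> /allP /(_ a); rewrite mem_iota ha => /(_ isT).
move=> /allP /(_ b); rewrite mem_iota hb => /(_ isT).
move=> /allP /(_ c); rewrite mem_iota hc => /(_ isT).
move=> /allP /(_ d); rewrite mem_iota hd => /(_ isT).
rewrite hok implyTb => /allP H; apply: H; exact: mem_lists.
Qed.

Section Rank.
Variables a b c d : nat.
Let S := sort leq (undup [:: a; b; c; d]).
Let r x := index x S.
Let g i := nth 0 S i.

Lemma S_sorted : sorted leq S.
Proof. exact: (sort_sorted leq_total). Qed.

Lemma S_uniq : uniq S.
Proof. by rewrite sort_uniq undup_uniq. Qed.

Lemma inS x : (x \in S) = (x \in [:: a; b; c; d]).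
Proof. by rewrite mem_sort mem_undup. Qed.

Lemma gr x : x \in S -> g (r x) = x.
Proof. exact: nth_index. Qed.

Lemma r_lt4 x : x \in S -> r x < 4.
Proof.
move=> hx; apply: leq_trans (_ : size S <= 4); first by rewrite index_mem.
rewrite size_sort; apply: leq_trans (size_undup _) _; by [].
Qed.

Lemma rmono x y : x \in S -> y \in S -> (r x < r y) = (x < y).
Proof.
move=> hx hy; apply/idP/idP => h.
  have le := sorted_ltn_index leq_trans S_sorted x y hx hy h.
  rewrite ltn_neqAle le andbT; apply/eqP => e; by rewrite e ltnn in h.
rewrite ltnNge; apply/negP => h'.
have := sorted_leq_index leq_trans leqnn S_sorted y x hy hx h'; lia.
Qed.

Lemma req x y : x \in S -> y \in S -> (r x == r y) = (x == y).
Proof.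
move=> hx hy; apply/eqP/eqP => [e|->] //.
by rewrite -(gr _ hx) -(gr _ hy) e.
Qed.

Lemma maxS x y : x \in S -> y \in S -> maxn x y \in S.
Proof. by move=> hx hy; case: leqP. Qed.

Lemma rmax x y : x \in S -> y \in S -> r (maxn x y) = maxn (r x) (r y).
Proof.
move=> hx hy; case: (ltngtP x y) => h.
- by have := h; rewrite -(rmono _ _ hx hy) => h'; rewrite (maxn_idPr (ltnW h')).
- by have := h; rewrite -(rmono _ _ hy hx) => h'; rewrite (maxn_idPl (ltnW h')).
- by rewrite h maxnn.
Qed.

Lemma Etr psi x y z : x \in S -> y \in S -> z \in S ->
  E psi x y z = E (fun i j => psi (g i) (g j)) (r x) (r y) (r z).
Proof.
move=> hx hy hz.
by rewrite /E (rmono _ _ hx hy) (rmono _ _ hy hx) (rmono _ _ hy hz) (rmono _ _ hz hy) (rmono _ _ hx hz) (rmono _ _ hz hx)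
  !(gr _ hx) !(gr _ hy) !(gr _ hz).
Qed.

Lemma rank_case psi : (forall i j, psi i j = psi j i) ->
  cons_ok a b c d -> ~~ F psi a b c d.
Proof.
move=> hsym hok.
have ha : a \in S by rewrite inS !inE eqxx.
have hb : b \in S by rewrite inS !inE eqxx !orbT.
have hc : c \in S by rewrite inS !inE eqxx !orbT.
have hd : d \in S by rewrite inS !inE eqxx !orbT.
have hab := maxS _ _ ha hb. have hbc := maxS _ _ hb hc. have hcd := maxS _ _ hc hd.
have habc := maxS _ _ hab hc. have hbcd := maxS _ _ hbc hd.
have : ~~ F (fun i j => psi (g i) (g j)) (r a) (r b) (r c) (r d).
  apply: finite_case; try exact: r_lt4.
  - by move=> i j; rewrite hsym.
  move: hok; rewrite /cons_ok -!rmax // !req //.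
by rewrite /F -!rmax // -!Etr.
Qed.
End Rank.

Lemma enum_sorted N (A : {set 'I_N}) : sorted (fun x y : 'I_N => x < y) (enum A).
Proof.
rewrite /enum_mem -enumT; apply: sorted_filter; first by move=> x y z; apply: ltn_trans.
by have := iota_ltn_sorted 0 N; rewrite -val_enum_ord sorted_map.
Qed.

Lemma enum4 N (v1 v2 v3 v4 : 'I_N) : v1 < v2 -> v2 < v3 -> v3 < v4 ->
  enum [set v1; v2; v3; v4] = [:: v1; v2; v3; v4].
Proof.
move=> h1 h2 h3.
apply: (@irr_sorted_eq _ (fun x y : 'I_N => x < y)).
- by move=> x y z; apply: ltn_trans.
- by move=> x; rewrite /= ltnn.
- exact: enum_sorted.
- by rewrite /= h1 h2 h3.
by move=> x; rewrite mem_enum !inE !orbA.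
Qed.

Arguments enum4 {N v1 v2 v3 v4}.

Lemma hedge_sorted M phi (w1 w2 w3 w4 : 'I_(2 ^ M)) : w1 < w2 -> w2 < w3 -> w3 < w4 ->
  hedge M phi [set w1; w2; w3; w4] -> edge_cond M phi w1 w2 w3 w4.
Proof.
move=> h1 h2 h3 [v1 [v2 [v3 [v4 [g1 g2 g3 e hE]]]]].
have e1 := enum4 h1 h2 h3; have e2 := enum4 g1 g2 g3.
rewrite -e e1 in e2; by case: e2 => -> -> -> ->.
Qed.

Arguments hedge_sorted {M phi w1 w2 w3 w4}.

Lemma E_sym M phi x y z : (forall x y, x < M -> y < M -> x != y -> phi x y = phi y x) ->
  x < M -> y < M -> z < M ->
  E phi x y z = E (fun i j => phi (minn i j) (maxn i j)) x y z.
Proof.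
move=> hsym hx hy hz.
have H : forall u v, u < M -> v < M -> phi u v = phi (minn u v) (maxn u v).
  move=> u v hu hv; case: (ltngtP u v) => h //; last by rewrite h.
  by apply: hsym => //; rewrite neq_ltn h orbT.
by apply: (E_ext phi (fun i j => phi (minn i j) (maxn i j)) x y z); apply: H.
Qed.

Arguments delta_triple {M u v w}.

Theorem mainTheorem2 (M : nat) (phi : nat -> nat -> bool) :
  1 <= M ->
  (forall x y, x < M -> y < M -> x != y -> phi x y = phi y x) ->
  ~ exists P : {set 'I_(2 ^ M)},
      #|P| = 5 /\ (forall S : {set 'I_(2 ^ M)}, S \subset P -> #|S| = 4 -> hedge M phi S).
Proof.
move=> hM hsym [P [hP hall]].
have hs := enum_sorted _ P.
have hsz : size (enum P) = 5 by rewrite -cardE.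
have hmem : forall x, (x \in P) = (x \in enum P) by move=> x; rewrite mem_enum.
case HE : (enum P) hs hsz => [|w0 [|w1 [|w2 [|w3 [|w4 [|? ?]]]]]] //= /and5P [h01 h12 h23 h34 _] _.
have key : forall (x1 x2 x3 x4 : 'I_(2 ^ M)), x1 < x2 -> x2 < x3 -> x3 < x4 ->
    [set x1; x2; x3; x4] \subset P -> edge_cond M phi x1 x2 x3 x4.
  move=> x1 x2 x3 x4 g1 g2 g3 hsub; apply: hedge_sorted => //.
  by apply: hall => //; rewrite cardE enum4.
have sub : forall x1 x2 x3 x4, x1 \in P -> x2 \in P -> x3 \in P -> x4 \in P ->
    [set x1; x2; x3; x4] \subset P.
  move=> x1 x2 x3 x4 g1 g2 g3 g4; apply/subsetP => x; rewrite !inE.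
  by case/orP => [/orP [/orP [] |] |] /eqP ->.
have i0 : w0 \in P by rewrite hmem HE !inE eqxx.
have i1 : w1 \in P by rewrite hmem HE !inE eqxx !orbT.
have i2 : w2 \in P by rewrite hmem HE !inE eqxx !orbT.
have i3 : w3 \in P by rewrite hmem HE !inE eqxx !orbT.
have i4 : w4 \in P by rewrite hmem HE !inE eqxx !orbT.
have h02 := ltn_trans h01 h12. have h13 := ltn_trans h12 h23.
have h24 := ltn_trans h23 h34. have h03 := ltn_trans h02 h23.
have h14 := ltn_trans h13 h34.
have T1 := key _ _ _ _ h01 h12 h23 (sub _ _ _ _ i0 i1 i2 i3).
have T2 := key _ _ _ _ h12 h23 h34 (sub _ _ _ _ i1 i2 i3 i4).
have T3 := key _ _ _ _ h02 h23 h34 (sub _ _ _ _ i0 i2 i3 i4).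
have T4 := key _ _ _ _ h01 h13 h34 (sub _ _ _ _ i0 i1 i3 i4).
have T5 := key _ _ _ _ h01 h12 h24 (sub _ _ _ _ i0 i1 i2 i4).
rewrite /edge_cond in T1 T2 T3 T4 T5.
have b0 := ltn_ord w0. have b1 := ltn_ord w1. have b2 := ltn_ord w2.
have b3 := ltn_ord w3. have b4 := ltn_ord w4.
have [n012 e02] := delta_triple b0 b1 b2 h01 h12.
have [n123 e13] := delta_triple b1 b2 b3 h12 h23.
have [n234 e24] := delta_triple b2 b3 b4 h23 h34.
have [n023 e03] := delta_triple b0 b2 b3 h02 h23.
have [n134 e14] := delta_triple b1 b3 b4 h13 h34.
have [n013 _] := delta_triple b0 b1 b3 h01 h13.
have [n014 _] := delta_triple b0 b1 b4 h01 h14.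
have [n024 _] := delta_triple b0 b2 b4 h02 h24.
have [n034 _] := delta_triple b0 b3 b4 h03 h34.
have [n124 _] := delta_triple b1 b2 b4 h12 h24.
rewrite e02 in T3 n023 n024 e03.
rewrite e13 in T4 n013 e14 n134.
rewrite e24 in T5 n024 n124.
rewrite e03 in n034.
rewrite e14 in n014.
set a := delta M w0 w1 in T1 T2 T3 T4 T5 n012 n123 n234 n023 n134 n013 n014 n024 n034 n124.
set b := delta M w1 w2 in T1 T2 T3 T4 T5 n012 n123 n234 n023 n134 n013 n014 n024 n034 n124.
set c := delta M w2 w3 in T1 T2 T3 T4 T5 n012 n123 n234 n023 n134 n013 n014 n024 n034 n124.
set d := delta M w3 w4 in T1 T2 T3 T4 T5 n012 n123 n234 n023 n134 n013 n014 n024 n034 n124.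
have ha : a < M := delta_ub _ _ _ hM.
have hb : b < M := delta_ub _ _ _ hM.
have hc : c < M := delta_ub _ _ _ hM.
have hd : d < M := delta_ub _ _ _ hM.
have hok : cons_ok a b c d.
  by rewrite /cons_ok n012 n013 n014 n023 n024 n034 n123 n124 n134 n234.
have hab : maxn a b < M by rewrite gtn_max ha hb.
have hbc : maxn b c < M by rewrite gtn_max hb hc.
have hcd : maxn c d < M by rewrite gtn_max hc hd.
have hps : forall i j, (fun i j => phi (minn i j) (maxn i j)) i j = (fun i j => phi (minn i j) (maxn i j)) j i.
  by move=> i j /=; rewrite minnC maxnC.
have := @rank_case a b c d (fun i j => phi (minn i j) (maxn i j)) hps hok.
rewrite /F -!(E_sym M phi _ _ _ hsym) //.
by rewrite /E T1 T2 T3 T4 T5.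
Qed.
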